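(* Under the three-receiver coding module below, at the beginning of any slot $t>0$, at least one receiver has decoded all of the packets $\mathbf{p}_1,\dots,\mathbf{p}_{m(t)}$, where $m(t)$ is the maximum rank among the three receivers at the beginning of slot $t$.
   Context: A sender broadcasts packets $\mathbf{p}_1,\mathbf{p}_2,\dots$ (indexed by arrival order, vectors over $\mathbb{F}_3$) to three receivers $1,2,3$ over a slotted erasure broadcast channel; each slot it transmits at most one linear combination of arrived packets, each receiver either receives it or suffers an erasure, and perfect feedback gives the sender every receiver's knowledge. The rank of a receiver is the dimension of the space of linear combinations it knows. Receiver $i$ has heard of a packet if it knows some linear combination involving that packet (with nonzero coefficient); $H_i$ is the set of packets it has heard of and $D_i$ the set it has decoded. ''Oldest'' means smallest index. Coding module: labels $L,N,D$ form a permutation of $\{1,2,3\}$; initially $L=1,N=2,D=3,m=0$. Each slot: let $U=\{\mathbf{p}_1,\dots,\mathbf{p}_m\}$ together with $\mathbf{p}_{m+1}$ if it has arrived, and set $S_1=D_N\cap D_D$, $S_2=D_N\cap(H_D\setminus D_D)$, $S_3=D_N\setminus H_D$, $S_4=D_D\setminus D_N$, $S_5=(H_D\setminus D_D)\setminus D_N$, $S_6=U\setminus(H_D\cup D_N)$. Transmit: Case 1 ($\mathbf{p}_{m+1}$ not arrived): if $S_2,S_4$ both nonempty send the sum of their oldest packets; else if $S_3,S_4$ both nonempty send the sum of their oldest packets; else send the oldest packet of the first nonempty set among $S_5,S_6,S_2,S_3,S_4$; if all are empty send nothing. Case 2 ($\mathbf{p}_{m+1}\in S_1$): send $\mathbf{p}_{m+1}$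 plus whatever Case 1 would send. Case 3 ($\mathbf{p}_{m+1}\in S_2$): send $\mathbf{p}_{m+1}+c\mathbf{p}$ with $\mathbf{p}$ the oldest packet of the first nonempty set among $S_4,S_5,S_6$, where $c=1$ unless $\mathbf{p}\in S_5$, in which case $c\in\{1,2\}$ is chosen so that the combination is innovative to receiver $D$. Case 4 ($\mathbf{p}_{m+1}\in S_3$): send $\mathbf{p}_{m+1}+\mathbf{p}$, $\mathbf{p}$ the oldest packet of the first nonempty set among $S_4,S_5,S_6$. Case 5 ($\mathbf{p}_{m+1}\in S_4$): send $\mathbf{p}_{m+1}+\mathbf{p}$, $\mathbf{p}$ the oldest packet of the first nonempty set among $S_2,S_3,S_6$. (In Cases 3–5, if all listed sets are empty, $\mathbf{p}_{m+1}$ is sent alone.) Case 6 (otherwise): send $\mathbf{p}_{m+1}$. After feedback, update $H_i,D_i$, set $m$ to the maximum rank of the three receivers; among receivers that have decoded all of $\mathbf{p}_1,\dots,\mathbf{p}_m$, label the one with lowest index $L$ (if there is none, assign labels arbitrarily); of the other two receivers, if exactly one has nonempty unsolved set $H_i\setminus D_i$, label it $D$ and the other $N$; otherwise assign $D,N$ arbitrarily. *)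

(* Defs.v *)
(* Three-receiver coding module over F_3 (receivers 1,2,3 are
   the ordinals 0,1,2 : 'I_3; packet p_(j+1) is index j : nat, i.e. 0-based). *)
From HB Require Import structures.
From mathcomp Require Import all_boot all_order all_algebra.
Set Implicit Arguments. Unset Strict Implicit. Unset Printing Implicit Defensive.
Import GRing.Theory.
Local Open Scope ring_scope.

(* A linear combination of packets is given by its coefficient sequence:
   coefficient of packet j is v`_j (implicit trailing zeros). *)
Definition cv := seq 'F_3.

Definition cvunit (j : nat) : cv := rcons (nseq j 0) 1.
Definition cvadd (u v : cv) : cv :=
  mkseq (fun k => u`_k + v`_k) (maxn (size u) (size v)).
Definition cvscale (c : 'F_3) (u : cv) : cv := map (fun x => c * x) u.
Definition sum2 (p q : nat) : cv := cvadd (cvunit p) (cvunit q).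

(* knowledge of a receiver: the list of combinations it received *)
Definition inspan (K : seq cv) (v : cv) : Prop :=
  exists c : seq 'F_3, forall j : nat,
    v`_j = \sum_(k < size K) c`_k * (nth [::] K k)`_j.

Definition decoded (K : seq cv) (j : nat) : Prop := inspan K (cvunit j).
Definition heard (K : seq cv) (j : nat) : Prop :=
  exists v, inspan K v /\ v`_j != 0.
Definition unsolved (K : seq cv) : Prop :=
  exists j, heard K j /\ ~ decoded K j.

Definition width (K : seq cv) : nat := (\max_(v <- K) size v)%N.
Definition kmx (K : seq cv) : 'M['F_3]_(size K, width K) :=
  \matrix_(i < size K, j < width K) (nth [::] K i)`_j.
Definition rank (K : seq cv) : nat := \rank (kmx K).

Definition knowledge := 'I_3 -> seq cv.
Definition maxrank (Ks : knowledge) : nat := (\max_(i < 3) rank (Ks i))%N.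

Definition alldec (K : seq cv) (m : nat) : Prop :=
  forall j, (j < m)%N -> decoded K j.

(* packet sets; a = number of arrived packets, m = current m *)
Definition S1 (Ks : knowledge) (N D : 'I_3) (j : nat) : Prop :=
  decoded (Ks N) j /\ decoded (Ks D) j.
Definition S2 (Ks : knowledge) (N D : 'I_3) (j : nat) : Prop :=
  decoded (Ks N) j /\ (heard (Ks D) j /\ ~ decoded (Ks D) j).
Definition S3 (Ks : knowledge) (N D : 'I_3) (j : nat) : Prop :=
  decoded (Ks N) j /\ ~ heard (Ks D) j.
Definition S4 (Ks : knowledge) (N D : 'I_3) (j : nat) : Prop :=
  decoded (Ks D) j /\ ~ decoded (Ks N) j.
Definition S5 (Ks : knowledge) (N D : 'I_3) (j : nat) : Prop :=
  (heard (Ks D) j /\ ~ decoded (Ks D) j) /\ ~ decoded (Ks N) j.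
Definition inU (m a j : nat) : Prop := (j < m)%N \/ (j = m /\ (m < a)%N).
Definition S6 (Ks : knowledge) (N D : 'I_3) (m a j : nat) : Prop :=
  inU m a j /\ ~ (heard (Ks D) j \/ decoded (Ks N) j).

Definition nonempty (S : nat -> Prop) : Prop := exists j, S j.
Definition oldest (S : nat -> Prop) (p : nat) : Prop :=
  S p /\ forall q, S q -> (p <= q)%N.

Fixpoint first_oldest (Ss : seq (nat -> Prop)) (o : option nat) : Prop :=
  match Ss with
  | [::] => o = None
  | P :: Ss' => (nonempty P /\ exists p, oldest P p /\ o = Some p)
                \/ (~ nonempty P /\ first_oldest Ss' o)
  end.

(* Case 1 transmission (x = None : nothing is sent) *)
Definition case1 (Ks : knowledge) (N D : 'I_3) (m a : nat) (x : option cv) : Prop :=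
  let s2 := S2 Ks N D in let s3 := S3 Ks N D in let s4 := S4 Ks N D in
  let s5 := S5 Ks N D in let s6 := S6 Ks N D m a in
  (nonempty s2 /\ nonempty s4 /\
     exists p q, oldest s2 p /\ oldest s4 q /\ x = Some (sum2 p q))
  \/ (~ (nonempty s2 /\ nonempty s4) /\ nonempty s3 /\ nonempty s4 /\
     exists p q, oldest s3 p /\ oldest s4 q /\ x = Some (sum2 p q))
  \/ (~ (nonempty s2 /\ nonempty s4) /\ ~ (nonempty s3 /\ nonempty s4) /\
     exists o, first_oldest [:: s5; s6; s2; s3; s4] o /\ x = omap cvunit o).

Definition plus_opt (m : nat) (o : option nat) : cv :=
  match o with None => cvunit m | Some p => sum2 m p end.

(* the packet sent in a slot, given knowledge Ks, labels N D, m, and the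
   number a of arrived packets (p_(m+1) has arrived iff m < a) *)
Definition transmit (Ks : knowledge) (N D : 'I_3) (m a : nat) (x : option cv) : Prop :=
  let s1 := S1 Ks N D in let s2 := S2 Ks N D in let s3 := S3 Ks N D in
  let s4 := S4 Ks N D in let s5 := S5 Ks N D in let s6 := S6 Ks N D m a in
  (~ (m < a)%N /\ case1 Ks N D m a x)
  \/ ((m < a)%N /\ s1 m /\ exists y, case1 Ks N D m a y /\
        x = Some (match y with None => cvunit m | Some v => cvadd (cvunit m) v end))
  \/ ((m < a)%N /\ s2 m /\ exists o, first_oldest [:: s4; s5; s6] o /\
        match o with
        | None => x = Some (cvunit m)
        | Some p =>
            (s5 p /\ exists c : 'F_3, (c = 1 \/ c = 2) /\
               x = Some (cvadd (cvunit m) (cvscale c (cvunit p))) /\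
               ~ inspan (Ks D) (cvadd (cvunit m) (cvscale c (cvunit p))))
            \/ (~ s5 p /\ x = Some (sum2 m p))
        end)
  \/ ((m < a)%N /\ s3 m /\ exists o, first_oldest [:: s4; s5; s6] o /\
        x = Some (plus_opt m o))
  \/ ((m < a)%N /\ s4 m /\ exists o, first_oldest [:: s2; s3; s6] o /\
        x = Some (plus_opt m o))
  \/ ((m < a)%N /\ ~ s1 m /\ ~ s2 m /\ ~ s3 m /\ ~ s4 m /\ x = Some (cvunit m)).

Definition receive (Ks : knowledge) (x : option cv) (r : 'I_3 -> bool) : knowledge :=
  fun i => match x with
           | Some v => if r i then rcons (Ks i) v else Ks i
           | None => Ks i
           end.

Definition relabel (Ks : knowledge) (L N D : 'I_3) : Prop :=
  let m := maxrank Ks in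
  [/\ L != N, L != D, N != D,
      (exists i, alldec (Ks i) m) ->
        alldec (Ks L) m /\ (forall i, alldec (Ks i) m -> (L <= i)%N)
    & ~ (unsolved (Ks N) /\ ~ unsolved (Ks D))].

Record state := State {
  know : knowledge; labL : 'I_3; labN : 'I_3; labD : 'I_3; mcur : nat }.

Definition initial (s : state) : Prop :=
  (forall i, know s i = [::]) /\ labL s = inord 0 /\ labN s = inord 1 /\
  labD s = inord 2 /\ mcur s = 0%N.

Definition step (a : nat) (r : 'I_3 -> bool) (s s' : state) : Prop :=
  exists x, transmit (know s) (labN s) (labD s) (mcur s) a x /\
    (forall i, know s' i = receive (know s) x r i) /\
    mcur s' = maxrank (know s') /\
    relabel (know s') (labL s') (labN s') (labD s').

(* Main.v *)
Require Import Defs.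
From mathcomp Require Import all_boot all_order all_algebra.
Set Implicit Arguments. Unset Strict Implicit. Unset Printing Implicit Defensive.
Import GRing.Theory.
Local Open Scope ring_scope.

Definition inV (n : nat) (v : cv) : Prop := forall j, (n <= j)%N -> v`_j = 0.
Definition allV n (K : seq cv) : Prop :=
  forall k, (k < size K)%N -> inV n (nth [::] K k).

Lemma inspan_inV n K v : allV n K -> inspan K v -> inV n v.
Proof. move=> HK [c Hc] j Hj; rewrite Hc big1 // => k _; by rewrite HK ?mulr0. Qed.

Lemma cvunit_nth j k : (cvunit j)`_k = (k == j)%:R.
Proof.
rewrite /cvunit nth_rcons size_nseq nth_nseq.
by case: ltngtP => // H; rewrite ?(ltn_eqF H) // eq_sym ?(ltn_eqF H).
Qed.

Lemma heard_le n K j : allV n K -> heard K j -> (j < n)%N.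
Proof.
move=> HK [v [Hv Hj]]; rewrite ltnNge; apply/negP => Hn.
by rewrite (inspan_inV HK Hv Hn) eqxx in Hj.
Qed.

Lemma decoded_heard K j : decoded K j -> heard K j.
Proof. move=> H; exists (cvunit j); split => //; by rewrite cvunit_nth eqxx oner_neq0. Qed.

Lemma inV_unit n j : (j < n)%N -> inV n (cvunit j).
Proof.
move=> Hj k Hk; rewrite cvunit_nth; case: eqP => // E.
by rewrite E leqNgt Hj in Hk.
Qed.

Lemma inV_add n u v : inV n u -> inV n v -> inV n (cvadd u v).
Proof.
move=> Hu Hv k Hk; rewrite /cvadd; case: (ltnP k (maxn (size u) (size v))) => H.
  by rewrite nth_mkseq // Hu // Hv // addr0.
by rewrite nth_default // size_mkseq.
Qed.

Lemma inV_scale n c u : inV n u -> inV n (cvscale c u).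
Proof.
move=> Hu k Hk; rewrite /cvscale; case: (ltnP k (size u)) => H.
  by rewrite (nth_map 0) // Hu // mulr0.
by rewrite nth_default // size_map.
Qed.

Lemma inV_mono n n' v : (n <= n')%N -> inV n v -> inV n' v.
Proof. move=> H Hv j Hj; apply: Hv; exact: leq_trans H Hj. Qed.

Definition tmx n (K : seq cv) : 'M['F_3]_(size K, n) :=
  \matrix_(i < size K, j < n) (nth [::] K i)`_j.

Lemma rank_trunc_le r a b (f : 'I_r -> nat -> 'F_3) :
  (forall i k, (b <= k)%N -> f i k = 0) ->
  (\rank (\matrix_(i < r, k < a) f i k) <= \rank (\matrix_(i < r, k < b) f i k))%N.
Proof.
move=> Hf.
pose P : 'M['F_3]_(b, a) := \matrix_(j, k) ((j : nat) == k)%:R.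
have -> : \matrix_(i < r, k < a) f i k = (\matrix_(i < r, k < b) f i k) *m P.
  apply/matrixP => i k; rewrite !mxE.
  case: (ltnP k b) => Hk.
    rewrite (bigD1 (Ordinal Hk)) //= !mxE eqxx mulr1 big1 ?addr0 // => j Hj.
    rewrite !mxE (_ : ((j : nat) == k) = false) ?mulr0 //.
    by apply/negbTE; apply: contra Hj => /eqP Hjk; apply/eqP/val_inj.
  rewrite Hf // big1 // => j _; rewrite !mxE.
  rewrite (_ : ((j : nat) == k) = false) ?mulr0 //.
  by apply/negbTE; rewrite neq_ltn (leq_trans (ltn_ord j) Hk).
exact: mxrankM_maxl.
Qed.

Lemma rank_tmx n K : allV n K -> rank K = \rank (tmx n K).
Proof.
move=> HK; apply/eqP; rewrite eqn_leq; apply/andP; split.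
  apply: (@rank_trunc_le _ _ _ (fun i k => (nth [::] K i)`_k)) => i k Hk.
  exact: HK.
apply: (@rank_trunc_le _ _ _ (fun i k => (nth [::] K i)`_k)) => i k Hk.
apply: nth_default; apply: leq_trans Hk.
rewrite /width; apply: (@leq_bigmax_seq _ _ xpredT (fun v : cv => size v)) => //.
exact: mem_nth.
Qed.

Definition rowv n (v : cv) : 'rV['F_3]_n := \row_(j < n) v`_j.

Lemma span_submx n K v : inspan K v -> (rowv n v <= tmx n K)%MS.
Proof.
case=> c Hc; apply/submxP; exists (\row_(k < size K) c`_k).
apply/rowP => j; rewrite !mxE Hc; apply: eq_bigr => k _; by rewrite !mxE.
Qed.

Lemma submx_span n K v : allV n K -> inV n v -> (rowv n v <= tmx n K)%MS -> inspan K v.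
Proof.
move=> HK Hv /submxP [D HD].
exists (mkseq (fun k => if (insub k : option 'I_(size K)) is Some i then D ord0 i else 0) (size K)) => j.
case: (ltnP j n) => Hj.
  have := congr1 (fun M : 'rV['F_3]_n => M ord0 (Ordinal Hj)) HD; rewrite !mxE => ->.
  by apply: eq_bigr => k _; rewrite !mxE nth_mkseq // valK.
by rewrite Hv // big1 // => k _; rewrite HK ?mulr0.
Qed.

Lemma rank_le n K : allV n K -> (rank K <= n)%N.
Proof. by move=> HK; rewrite (rank_tmx HK) rank_leq_col. Qed.

Lemma full_decoded n K : allV n K -> rank K = n -> alldec K n.
Proof.
move=> HK Hr j Hj; apply: (submx_span HK (inV_unit Hj)).
apply: submx_full; by rewrite /row_full -(rank_tmx HK) Hr.
Qed.

Lemma dec_rank m K : allV m.+1 K -> alldec K m -> (m <= rank K)%N.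
Proof.
move=> HK HD; rewrite (rank_tmx HK).
have H : ((pid_mx m : 'M['F_3]_(m, m.+1)) <= tmx m.+1 K)%MS.
  apply/row_subP => i.
  have -> : row i (pid_mx m : 'M['F_3]_(m, m.+1)) = rowv m.+1 (cvunit i).
    by apply/rowP => k; rewrite !mxE cvunit_nth ltn_ord andbT eq_sym.
  exact: span_submx (HD i (ltn_ord i)).
by have := mxrankS H; rewrite rank_pid_mx.
Qed.

Lemma inspan_rcons K w v : inspan K v -> inspan (rcons K w) v.
Proof.
case=> c Hc; exists (take (size K) c) => j; rewrite Hc size_rcons big_ord_recr /=.
rewrite [(take _ c)`_ _]nth_default ?mul0r ?addr0; last by rewrite size_take geq_minl.
by apply: eq_bigr => k _; rewrite nth_take // nth_rcons ltn_ord.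
Qed.

Lemma allV_rcons n K v : allV n K -> inV n v -> allV n (rcons K v).
Proof.
move=> HK Hv k; rewrite size_rcons ltnS leq_eqVlt nth_rcons.
case/orP => [/eqP ->|H]; first by rewrite ltnn eqxx.
by rewrite H; apply: HK.
Qed.

Fixpoint bndall (n : nat) (Ss : seq (nat -> Prop)) : Prop :=
  match Ss with
  | [::] => True
  | P :: Ss' => (forall j, P j -> (j < n)%N) /\ bndall n Ss'
  end.

Lemma first_oldest_bnd n Ss o : bndall n Ss -> first_oldest Ss o ->
  forall p, o = Some p -> (p < n)%N.
Proof.
elim: Ss => [|P Ss IH] /=; first by move=> _ -> p.
move=> [HP HS] [[_ [q [[Hq _] ->]]] | [_ H]] p.
  by case=> <-; apply: HP.
exact: IH.
Qed.

Definition oinV n (x : option cv) : Prop :=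
  match x with Some v => inV n v | None => True end.

Section Bnd.
Variables (Ks : knowledge) (N D : 'I_3) (m a : nat).
Hypotheses (HN : allV m.+1 (Ks N)) (HD : allV m.+1 (Ks D)).

Lemma bS2 j : S2 Ks N D j -> (j < m.+1)%N.
Proof. by case=> H _; apply: (heard_le HN); apply: decoded_heard. Qed.
Lemma bS3 j : S3 Ks N D j -> (j < m.+1)%N.
Proof. by case=> H _; apply: (heard_le HN); apply: decoded_heard. Qed.
Lemma bS4 j : S4 Ks N D j -> (j < m.+1)%N.
Proof. by case=> H _; apply: (heard_le HD); apply: decoded_heard. Qed.
Lemma bS5 j : S5 Ks N D j -> (j < m.+1)%N.
Proof. by case=> [[H _] _]; apply: (heard_le HD). Qed.
Lemma bS6 j : S6 Ks N D m a j -> (j < m.+1)%N.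
Proof. by case=> [[H|[-> _]] _] //; apply: ltnW. Qed.

Lemma case1_bnd x : case1 Ks N D m a x -> oinV m.+1 x.
Proof.
rewrite /case1.
case=> [[_ [_ [p [q [[Hp _] [[Hq _] ->]]]]]] |
        [[_ [_ [_ [p [q [[Hp _] [[Hq _] ->]]]]]]] | [_ [_ [o [Ho ->]]]]]] /=.
- by apply: inV_add; apply: inV_unit; [apply: bS2 | apply: bS4].
- by apply: inV_add; apply: inV_unit; [apply: bS3 | apply: bS4].
- case: o Ho => [p Ho|_] //=; apply: inV_unit.
  apply: (@first_oldest_bnd m.+1 _ _ _ Ho p (erefl _)).
  by split; [exact: bS5|split; [exact: bS6|split; [exact: bS2|split; [exact: bS3|split; [exact: bS4|]]]]].
Qed.

Lemma plus_opt_bnd Ss o : bndall m.+1 Ss -> first_oldest Ss o -> inV m.+1 (plus_opt m o).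
Proof.
move=> HS Ho; case: o Ho => [p|] Ho /=; last exact: inV_unit.
by apply: inV_add; apply: inV_unit => //; apply: (first_oldest_bnd HS Ho).
Qed.

Lemma transmit_bnd x : transmit Ks N D m a x -> oinV m.+1 x.
Proof.
rewrite /transmit.
case=> [[_ H]|[[_ [_ [y [Hy ->]]]]|[[_ [_ [o [Ho H]]]]|[[_ [_ [o [Ho ->]]]]|
        [[_ [_ [o [Ho ->]]]]|[_ [_ [_ [_ [_ ->]]]]]]]]]].
- exact: case1_bnd.
- have := case1_bnd Hy; case: y Hy => [v|] _ Hv /=; last exact: inV_unit.
  by apply: inV_add => //; apply: inV_unit.
- have HS : bndall m.+1 [:: S4 Ks N D; S5 Ks N D; S6 Ks N D m a].
    by split; [exact: bS4|split; [exact: bS5|split; [exact: bS6|]]].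
  case: o Ho H => [p|] Ho /=; last by move=> ->; apply: inV_unit.
  have Hp := first_oldest_bnd HS Ho (erefl _).
  case=> [[_ [c [_ [-> _]]]]|[_ ->]] /=.
    by apply: inV_add; [apply: inV_unit | apply: inV_scale; apply: inV_unit].
  by apply: inV_add; apply: inV_unit.
- apply: (plus_opt_bnd _ Ho).
  by split; [exact: bS4|split; [exact: bS5|split; [exact: bS6|]]].
- apply: (plus_opt_bnd _ Ho).
  by split; [exact: bS2|split; [exact: bS3|split; [exact: bS6|]]].
- exact: inV_unit.
Qed.
End Bnd.

Definition Inv (s : state) : Prop :=
  mcur s = maxrank (know s) /\ (forall i, allV (maxrank (know s)).+1 (know s i)) /\
  exists i, alldec (know s i) (maxrank (know s)).

Lemma alldec_rcons K v m : alldec K m -> alldec (rcons K v) m.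
Proof. by move=> H j Hj; apply: inspan_rcons; apply: H. Qed.

Lemma step_inv a r s s' : Inv s -> step a r s s' -> Inv s'.
Proof.
move=> [Hm [HV [i0 Hi0]]] [x [Htr [Hk [Hm' _]]]].
set m := maxrank (know s) in Hm HV Hi0.
rewrite Hm in Htr.
have Hx := transmit_bnd (HV _) (HV _) Htr.
have HV' : forall i, allV m.+1 (know s' i).
  move=> i; rewrite Hk /receive; destruct x as [v|] => //.
  by case: (r i) => //; apply: allV_rcons.
have Hd' : alldec (know s' i0) m.
  rewrite Hk /receive; destruct x as [v|] => //.
  by case: (r i0) => //; apply: alldec_rcons.
have Hlo : (m <= maxrank (know s'))%N.
  apply: leq_trans (dec_rank (HV' i0) Hd') _.
  exact: (@leq_bigmax _ (fun i => rank (know s' i))).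
have [i1 Hi1] := @eq_bigmax _ (fun i => rank (know s' i)) (ltac:(by rewrite card_ord)).
have Hhi : (maxrank (know s') <= m.+1)%N.
  by rewrite /maxrank Hi1; apply: rank_le.
split => //.
have : maxrank (know s') = m \/ maxrank (know s') = m.+1.
  move: Hlo Hhi; rewrite leq_eqVlt => /orP [/eqP <-|H1] H2; first by left.
  by right; apply/eqP; rewrite eqn_leq H1 H2.
have E1 : maxrank (know s') = rank (know s' i1) by exact: Hi1.
case=> E; rewrite E.
  by split => //; exists i0.
split; first by move=> i k Hk0; apply: (inV_mono (leqnSn _)); apply: HV'.
exists i1; apply: full_decoded => //.
by rewrite -E1 E.
Qed.

Theorem theorem11 (arr : nat -> nat) (rcv : nat -> 'I_3 -> bool)
  (st : nat -> state) :
  (forall s t, (s <= t)%N -> (arr s <= arr t)%N) ->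
  initial (st 0%N) ->
  (forall t, step (arr t) (rcv t) (st t) (st t.+1)) ->
  forall t, (0 < t)%N ->
    exists i : 'I_3, alldec (know (st t) i) (maxrank (know (st t))).
Proof.
move=> _ [Hk0 [_ [_ [_ Hm0]]]] Hstep t _.
suff : Inv (st t) by case=> _ [_].
elim: t => [|t IH]; last exact: step_inv IH (Hstep t).
have H0 : maxrank (know (st 0%N)) = 0%N.
  apply/eqP; rewrite -leqn0; apply/bigmax_leqP => i _.
  by rewrite /rank Hk0 rank_leq_row.
rewrite /Inv H0 Hm0; split => //; split.
  by move=> i k; rewrite Hk0.
by exists ord0 => j.
Qed.
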